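(* Let $s\ge 2$, let $J$ be a finite index set, and let $\gamma_j\ge 0$ ($j\in J$) with $\sum_{j\in J}\gamma_j\le 1$. For each $j\in J$ and $i'\in[s]$ let $S^j_{i'}$ be a finite set and $f^j_{i'}$ a nonnegative integer with $f^j_{i'}\le |S^j_{i'}|$, such that for each fixed $j$ the sets $S^j_1,\dots,S^j_s$ are pairwise disjoint. Let $S_{i'}=\bigcup_{j\in J}S^j_{i'}$. Then there exist pairwise disjoint sets $T_{i'}\subseteq S_{i'}$, $i'=1,\dots,s$, such that $|T_{i'}|=\left\lfloor \sum_{j\in J}\gamma_j f^j_{i'}\right\rfloor$ for all $i'\in[s]$. *)

(* Defs.v *)
From HB Require Import structures.
From mathcomp Require Import all_boot all_order all_algebra.
Set Implicit Arguments. Unset Strict Implicit. Unset Printing Implicit Defensive.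

(* Main.v *)
Require Import Defs.
From mathcomp Require Import all_boot all_order all_algebra.
Import Order.TTheory GRing.Theory Num.Theory.

Section Hall.
Variables (I U : finType) (n : I -> nat).

Definition hallb (A : I -> {set U}) :=
  [forall P : {set I}, \sum_(i in P) n i <= #|\bigcup_(i in P) A i|].

Definition rm (A : I -> {set U}) i x := fun l => if l == i then A i :\ x else A l.

Lemma rm_sub (A : I -> {set U}) i x l : rm A i x l \subset A l.
Proof. rewrite /rm; case: eqP => [->|_]; [exact: subsetDl | exact: subxx]. Qed.

Lemma rm_in (A : I -> {set U}) i (x : U) l y : y \in A l -> y != x -> y \in rm A i x l.
Proof. rewrite /rm; case: (eqVneq l i) => [->|_] Hy Hyx //; by rewrite !inE Hyx Hy. Qed.

Lemma rm_other (A : I -> {set U}) i (x : U) l : l != i -> rm A i x l = A l.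
Proof. by rewrite /rm => /negbTE ->. Qed.

Lemma rm_card (A : I -> {set U}) i (x : U) : x \in A i -> \sum_l #|rm A i x l| < \sum_l #|A l|.
Proof.
move=> Hx; rewrite (bigD1 i) //= [X in _ < X](bigD1 i) //=.
have -> : \sum_(l | l != i) #|rm A i x l| = \sum_(l | l != i) #|A l|.
  by apply: eq_bigr => l Hl; rewrite rm_other.
by rewrite ltn_add2r /rm eqxx (cardsD1 x (A i)) Hx.
Qed.

Lemma sum_UI (P Q : {set I}) : \sum_(i in P :|: Q) n i + \sum_(i in P :&: Q) n i = \sum_(i in P) n i + \sum_(i in Q) n i.
Proof.
rewrite [\sum_(i in P :|: Q) _]big_mkcond [\sum_(i in P :&: Q) _]big_mkcond [\sum_(i in P) _]big_mkcond [\sum_(i in Q) _]big_mkcond -!big_split /=.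
apply: eq_bigr => i _; rewrite !inE; by case: (i \in P); case: (i \in Q); rewrite /= ?addn0.
Qed.

Lemma hall_rm (A : I -> {set U}) i k (x : U) : hallb A -> i != k -> x \in A i -> x \in A k ->
  hallb (rm A i x) || hallb (rm A k x).
Proof.
move=> HA Hik Hxi Hxk; apply/negPn/negP => /norP [/forallPn [P HP] /forallPn [Q HQ]].
rewrite -ltnNge in HP; rewrite -ltnNge in HQ.
set X := \bigcup_(l in P) rm A i x l in HP.
set Y := \bigcup_(l in Q) rm A k x l in HQ.
have HU := forallP HA (P :|: Q). have HI := forallP HA (P :&: Q).
have key : #|\bigcup_(l in P :|: Q) A l| + #|\bigcup_(l in P :&: Q) A l| <= #|X :|: Y| + #|X :&: Y| + 1.
  case: (boolP (x \in X :|: Y)) => Hx.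
    have h1 : \bigcup_(l in P :|: Q) A l \subset X :|: Y.
      apply/bigcupsP => l Hl; apply/subsetP => y Hy.
      case: (eqVneq y x) => [->//|Hyx].
      move: Hl; rewrite inE => /orP [Hl|Hl]; rewrite inE; apply/orP; [left|right];
        apply/bigcupP; exists l => //; exact: rm_in.
    have h2 : \bigcup_(l in P :&: Q) A l \subset (X :&: Y) :|: [set x].
      apply/bigcupsP => l Hl; apply/subsetP => y Hy; move: Hl; rewrite inE => /andP [HlP HlQ].
      case: (eqVneq y x) => [->|Hyx]; first by rewrite !inE eqxx orbT.
      rewrite !inE; apply/orP; left; apply/andP; split; apply/bigcupP; exists l => //; exact: rm_in.
    rewrite -addnA leq_add ?(subset_leq_card h1) //.
    apply: (leq_trans (subset_leq_card h2)).
    by apply: leq_trans (leq_card_setU _ _).1 _; rewrite cards1.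
  have h1 : \bigcup_(l in P :|: Q) A l \subset (X :|: Y) :|: [set x].
    apply/bigcupsP => l Hl; apply/subsetP => y Hy.
    case: (eqVneq y x) => [->|Hyx]; first by rewrite !inE eqxx orbT.
    rewrite inE; apply/orP; left.
    move: Hl; rewrite inE => /orP [Hl|Hl]; rewrite inE; apply/orP; [left|right];
      apply/bigcupP; exists l => //; exact: rm_in.
  have h2 : \bigcup_(l in P :&: Q) A l \subset X :&: Y.
    apply/bigcupsP => l Hl; apply/subsetP => y Hy; move: Hl; rewrite inE => /andP [HlP HlQ].
    case: (eqVneq y x) => [Eyx|Hyx]; last first.
      rewrite !inE; apply/andP; split; apply/bigcupP; exists l => //; exact: rm_in.
    subst y; exfalso; move/negP: Hx; apply.
    case: (eqVneq l i) => [Eli|Nli].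
      rewrite inE; apply/orP; right; apply/bigcupP; exists l => //.
      rewrite rm_other //; subst l; exact: Hik.
    rewrite inE; apply/orP; left; apply/bigcupP; exists l => //.
    by rewrite rm_other.
  rewrite addnAC leq_add ?(subset_leq_card h2) //.
  apply: (leq_trans (subset_leq_card h1)).
  by apply: leq_trans (leq_card_setU _ _).1 _; rewrite cards1.
have := leq_add HU HI; rewrite sum_UI => H1.
have H2 := leq_add HP HQ.
move: (leq_trans H2 (leq_trans H1 key)); rewrite cardsUI.
by rewrite addSn addnS addn1 !ltnS ltnn.
Qed.

Lemma sub_size (B : {set U}) c : c <= #|B| -> exists C : {set U}, (C \subset B) && (#|C| == c).
Proof.
elim: c => [|c IHc] Hc; first by exists set0; rewrite sub0set cards0.
have [C /andP [HC /eqP HCc]] := IHc (ltnW Hc).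
have [y Hy] : exists y, y \in B :\: C.
  apply/set0Pn; rewrite -card_gt0 cardsD (setIidPr HC) subn_gt0 HCc //.
move: Hy; rewrite inE => /andP [HyC HyB].
exists (y |: C); rewrite cardsU1 HyC HCc add1n eqxx andbT.
by apply/subsetP => z; rewrite !inE => /orP [/eqP ->|/(subsetP HC)].
Qed.

Definition hall_concl (A : I -> {set U}) :=
  exists T : I -> {set U}, (forall l, T l \subset A l) /\
    (forall l k, l != k -> [disjoint T l & T k]) /\ (forall l, #|T l| = n l).

Lemma hall_disj (A : I -> {set U}) : hallb A ->
  (forall l k, l != k -> [disjoint A l & A k]) -> hall_concl A.
Proof.
move=> HA Hd.
have Hn l : n l <= #|A l| by have := forallP HA [set l]; rewrite big_set1 big_set1.
pose T l := odflt set0 [pick C : {set U} | (C \subset A l) && (#|C| == n l)].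
have HT l : (T l \subset A l) && (#|T l| == n l).
  rewrite /T; case: pickP => [C //|H0].
  by have [C HC] := @sub_size (A l) _ (Hn l); rewrite H0 in HC.
exists T; split; [|split].
- by move=> l; case/andP: (HT l).
- move=> l k Hlk; apply: (disjointWl (proj1 (andP (HT l)))).
  exact: (disjointWr (proj1 (andP (HT k))) (Hd _ _ Hlk)).
- by move=> l; case/andP: (HT l) => _ /eqP.
Qed.

Lemma hall_thm m : forall A : I -> {set U}, \sum_l #|A l| < m -> hallb A -> hall_concl A.
Proof.
elim: m => [//|m IH] A Hm HA.
case: (boolP [forall l, forall k, (l != k) ==> [disjoint A l & A k]]) => Hd.
  apply: hall_disj => // l k Hlk.
  by move/forallP: Hd => /(_ l) /forallP /(_ k) /implyP; apply.
move/forallPn: Hd => [l /forallPn [k]]; rewrite negb_imply => /andP [Hlk].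
rewrite -setI_eq0 => /set0Pn [x]; rewrite inE => /andP [Hxl Hxk].
have HT (B : I -> {set U}) i : hallb (rm B i x) -> x \in B i -> (B = A) -> hall_concl A.
  move=> HB HxB EB; subst B.
  have [T [T1 [T2 T3]]] := IH _ (leq_trans (rm_card _ _ _ HxB) Hm) HB.
  exists T; split; [|split] => //.
  by move=> j; apply: subset_trans (T1 j) (rm_sub _ _ _ _).
case/orP: (hall_rm _ _ _ _ HA Hlk Hxl Hxk) => H.
  exact: (HT A l H Hxl).
exact: (HT A k H Hxk).
Qed.
End Hall.
From HB Require Import structures.
From mathcomp Require Import all_boot all_order all_algebra.
Import Order.TTheory GRing.Theory Num.Theory.

Lemma bigcup_seq_mem (I U : finType) (F : I -> {set U}) (r : seq I) y :
  y \in \bigcup_(i <- r) F i -> exists2 k, k \in r & y \in F k.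
Proof.
elim: r => [|a r IH]; first by rewrite big_nil inE.
rewrite big_cons inE => /orP [H|/IH [k Hk Hyk]]; first by exists a; rewrite ?inE ?eqxx.
by exists k; rewrite // inE Hk orbT.
Qed.

Lemma sum_card_seq (I U : finType) (F : I -> {set U}) (r : seq I) : uniq r ->
  (forall i k, i != k -> [disjoint F i & F k]) ->
  \sum_(i <- r) #|F i| = #|\bigcup_(i <- r) F i|.
Proof.
move=> + Hd; elim: r => [|a r IH] /=; first by rewrite !big_nil cards0.
move=> /andP [Har Hr]; rewrite !big_cons IH // cardsU.
have -> : F a :&: \bigcup_(i <- r) F i = set0.
  apply/setP => y; rewrite !inE; apply/negP => /andP [Hy /bigcup_seq_mem [k Hk Hyk]].
  have Hak : a != k by apply: contraNneq Har => ->.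
  move: (Hd a k Hak); rewrite -setI_eq0 => /eqP E.
  have : y \in F a :&: F k by rewrite inE Hy Hyk.
  by rewrite E inE.
by rewrite cards0 subn0.
Qed.

Lemma sum_card_disj (I U : finType) (F : I -> {set U}) (P : {set I}) :
  (forall i k, i != k -> [disjoint F i & F k]) ->
  \sum_(i in P) #|F i| = #|\bigcup_(i in P) F i|.
Proof.
move=> Hd; rewrite -!big_enum; apply: sum_card_seq => //; exact: enum_uniq.
Qed.

Theorem mainTheorem2 (s : nat) (hs : (2 <= s)%N) (J : finType)
  (R : archiRealFieldType) (gamma : J -> R) (U : finType)
  (S : J -> 'I_s -> {set U}) (f : J -> 'I_s -> nat)
  (hg0 : forall j, (0 <= gamma j)%R)
  (hg1 : (\sum_(j : J) gamma j <= 1)%R)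
  (hf : forall j i, (f j i <= #|S j i|)%N)
  (hdisj : forall j (i k : 'I_s), i != k -> [disjoint S j i & S j k]) :
  exists T : 'I_s -> {set U},
    (forall i, T i \subset \bigcup_(j : J) S j i) /\
    (forall i k : 'I_s, i != k -> [disjoint T i & T k]) /\
    (forall i, (#|T i|%:Z = Num.floor (\sum_(j : J) gamma j * (f j i)%:R))%R).
Proof.
pose x i := (\sum_(j : J) gamma j * (f j i)%:R)%R.
pose n i := `|Num.floor (x i)|%N.
pose A i := \bigcup_(j : J) S j i.
have Hx0 i : (0 <= x i)%R.
  by apply: sumr_ge0 => j _; apply: mulr_ge0 => //; apply: ler0n.
have Hn i : ((n i)%:Z = Num.floor (x i))%R.
  by rewrite /n gez0_abs // floor_ge0.
have Hnx i : ((n i)%:R <= x i)%R.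
  have -> : ((n i)%:R = ((n i)%:Z)%:~R :> R)%R by [].
  by rewrite Hn floor_le.
have Hhall : @hallb _ _ n A.
  apply/forallP => P.
  set N := #|\bigcup_(i in P) A i|.
  rewrite -(ler_nat R) natr_sum.
  apply: (@le_trans _ _ (\sum_(i in P) x i)%R).
    by apply: ler_sum => i _; exact: Hnx.
  rewrite /x exchange_big /=.
  apply: (@le_trans _ _ (\sum_(j : J) gamma j * N%:R)%R).
    apply: ler_sum => j _; rewrite -mulr_sumr -natr_sum.
    apply: ler_wpM2l => //; rewrite ler_nat.
    apply: (@leq_trans (\sum_(i in P) #|S j i|)); first by apply: leq_sum => i _.
    rewrite (@sum_card_disj _ _ _ P (hdisj j)).
    apply: subset_leq_card; apply/bigcupsP => i Hi.
    apply: (subset_trans _ (bigcup_sup i Hi)).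
    exact: (bigcup_sup j isT).
  rewrite -mulr_suml -[X in (_ <= X)%R]mul1r.
  by apply: ler_wpM2r => //; apply: ler0n.
have [T [T1 [T2 T3]]] := @hall_thm _ _ n _ A (ltnSn _) Hhall.
exists T; split; [exact T1|split; [exact T2|]].
by move=> i; rewrite T3 Hn.
Qed.
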